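(* Let $G$ be a bipartite graph and let $K:E(G)\to L_n$ be an edge-labeling with permutations from $L_n$. Then $(G,K)$ has no consistent vertex-labeling if and only if $G$ contains a chordless (induced) cycle $C$ such that $(C,K|_{E(C)})$ has no consistent vertex-labeling.
   Context: Labeled graphs: $G$ is a finite simple graph in which each edge is given a fixed orientation; $uv$ denotes the edge oriented from $u$ to $v$. An edge-labeling $K:E(G)\to S_n$ assigns to each edge a permutation of $[n]=\{0,\dots,n-1\}$. A vertex-labeling is a map $k:V(G)\to[n]$. An edge $uv$ with $K(uv)=\pi$ is a contradiction of $k$ if $\pi(k(u))\neq k(v)$. A vertex-labeling is consistent if it has no contradictions. $L_n=\{\pi_0,\dots,\pi_{n-1}\}\subseteq S_n$, where $\pi_i(x)\equiv i-x \pmod n$. Each $\pi_i$ is an involution, so orientation is irrelevant. *)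

(* Defs.v *)
From mathcomp Require Import all_boot.
Set Implicit Arguments. Unset Strict Implicit. Unset Printing Implicit Defensive.

(* The permutation pi_i of [n] = 'I_n : x |-> (i - x) mod n. *)
Definition piL (n : nat) (i x : 'I_n) : 'I_n :=
  @Ordinal n ((i + (n - x)) %% n)
    (ltn_pmod _ (leq_ltn_trans (leq0n i) (ltn_ord i))).

Definition simple_graph (T : finType) (e : rel T) : Prop :=
  (forall u, ~~ e u u) /\ (forall u v, e u v = e v u).

Definition bipartite (T : finType) (e : rel T) : Prop :=
  exists f : T -> bool, forall u v, e u v -> f u != f v.

(* An edge labeling with values in L_n: K u v is the index i of pi_i
   labelling the edge {u,v}; it is the same for both orientations. *)
Definition edge_labeling (T : finType) (e : rel T) (n : nat) (K : T -> T -> 'I_n) : Prop :=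
  forall u v, e u v -> K u v = K v u.

Definition has_consistent (T : finType) (e : rel T) (n : nat) (K : T -> T -> 'I_n) : Prop :=
  exists k : T -> 'I_n, forall u v, e u v -> piL (K u v) (k u) = k v.

Definition cyc_adj (T : eqType) (c : seq T) (u v : T) : bool :=
  (next c u == v) || (next c v == u).

Definition chordless_cycle (T : finType) (e : rel T) (c : seq T) : Prop :=
  [/\ uniq c, 3 <= size c &
      forall u v, u \in c -> v \in c -> e u v = cyc_adj c u v].

Definition cycle_consistent (T : finType) (n : nat) (K : T -> T -> 'I_n) (c : seq T) : Prop :=
  exists k : T -> 'I_n, forall u v, u \in c -> v \in c -> cyc_adj c u v ->
    piL (K u v) (k u) = k v.

(* Main.v *)
Require Import Defs.
From mathcomp Require Import all_boot all_order all_algebra.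
Set Implicit Arguments. Unset Strict Implicit. Unset Printing Implicit Defensive.
From mathcomp Require Import ring zify.
From Stdlib Require Import Classical.
Import GRing.Theory.

Lemma piLE m (i x : 'Z_(m.+2)) : piL i x = (i - x)%R.
Proof. by apply: val_inj => /=; rewrite modnDmr. Qed.

Section S.
Variables (m : nat) (T : finType) (e : rel T) (f : T -> bool) (K : T -> T -> 'Z_(m.+2)).
Hypothesis esym : forall u v, e u v = e v u.
Hypothesis eirr : forall u, ~~ e u u.
Hypothesis fbip : forall u v, e u v -> f u != f v.
Hypothesis Ksym : forall u v, e u v -> K u v = K v u.
Local Open Scope ring_scope.

Definition g u v : 'Z_(m.+2) := if f u then K u v else - K u v.
Lemma g_anti u v : e u v -> g v u = - g u v.
Proof.
move=> euv; have := fbip euv; rewrite /g (Ksym euv).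
by case: (f u); case: (f v) => //= _; rewrite opprK.
Qed.

Fixpoint wg x p := if p is y :: p' then g x y + wg y p' else 0.
Lemma wg_cat x p q : wg x (p ++ q) = wg x p + wg (last x p) q.
Proof. by elim: p x => [|y p IH] x /=; rewrite ?add0r // IH addrA. Qed.
Lemma wg_rcons x p y : wg x (rcons p y) = wg x p + g (last x p) y.
Proof. by rewrite -cats1 wg_cat /= addr0. Qed.
Definition cg c := if c is y :: q then wg y (rcons q y) else 0.
Lemma cg_rot1 c : cg (rot 1 c) = cg c.
Proof.
case: c => [|y [|z q]] //; rewrite rot1_cons /= !wg_rcons /= last_rcons.
by rewrite [RHS]addrC.
Qed.
Lemma cg_rot i c : cg (rot i c) = cg c.
Proof.
elim: i => [|i IH]; first by rewrite rot0.
case: (leqP (i.+1) (size c)) => hi; last by rewrite rot_oversize // ltnW.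
have -> : rot i.+1 c = rot 1 (rot i c) by rewrite -rotD.
by rewrite cg_rot1.
Qed.

Lemma wg_rev x p : path e x p -> wg (last x p) (rev (belast x p)) = - wg x p.
Proof.
elim: p x => [|y p IH] x /=; first by rewrite oppr0.
case/andP=> exy pp; rewrite rev_cons wg_rcons IH //.
have -> : last (last y p) (rev (belast y p)) = y.
  by case: p {IH pp} => [|w p] //=; rewrite rev_cons last_rcons.
by rewrite g_anti // opprD addrC.
Qed.

Lemma last_rev_belast (x : T) p : last (last x p) (rev (belast x p)) = x.
Proof. by case: p => [|w p] //=; rewrite rev_cons last_rcons. Qed.

Lemma chordless_gain c (k : T -> 'Z_(m.+2)) : chordless_cycle e c ->
  (forall u v, u \in c -> v \in c -> cyc_adj c u v -> piL (K u v) (k u) = k v) ->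
  cg c = 0.
Proof.
case=> Uc _ hc hk.
pose h u := if f u then k u else - k u.
have edge a : a \in c -> h a - h (next c a) = g a (next c a).
  move=> ac; have adj : cyc_adj c a (next c a) by rewrite /cyc_adj eqxx.
  have ab : e a (next c a) by rewrite hc ?mem_next.
  have nc : next c a \in c by rewrite mem_next.
  have := hk a _ ac nc adj.
  rewrite piLE /h /g => <-; have := fbip ab.
  by case: (f a); case: (f (next c a)) => // _; ring.
have walk x p : x \in c -> path (frel (next c)) x p -> h x - h (last x p) = wg x p.
  elim: p x => [|y p IH] x xc /=; first by rewrite subrr.
  case/andP=> /eqP nxy pp.
  have yc : y \in c by rewrite -nxy mem_next.
  rewrite -(IH y yc pp) -nxy -edge // nxy; ring.
have := cycle_next Uc; case: c Uc hc hk edge walk => [|y q] //= _ _ _ _ walk cy.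
rewrite -walk ?inE ?eqxx // last_rcons; ring.
Qed.

Lemma split_dup (c : seq T) : ~~ uniq c -> exists a y b d, c = a ++ y :: b ++ y :: d.
Proof.
elim: c => [|x s IH] //=; rewrite negb_and negbK.
case: (boolP (x \in s)) => [xs _ | xs /= us].
  by have [b d] := splitPr xs; exists [::], x, b, d.
by case: (IH us) => a [y [b [d ->]]]; exists (x :: a), y, b, d.
Qed.

Lemma mem_split (x : T) s : x \in s -> exists s1 s2, s = s1 ++ x :: s2.
Proof. by case/splitPr => s1 s2; exists s1, s2. Qed.

Lemma min_cycle N c : (size c <= N)%N -> cycle e c -> cg c != 0 ->
  exists c', chordless_cycle e c' /\ cg c' != 0.
Proof.
elim: N c => [|N IH] c; first by case: c => // _ _; rewrite eqxx.
move=> sc cc gc.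
have small c' : (size c' < size c)%N -> cycle e c' -> cg c' != 0 ->
    exists c'', chordless_cycle e c'' /\ cg c'' != 0.
  move=> s1; apply: IH; move: s1 sc; clear; lia.
case: (boolP (uniq c)) => Uc; last first.
  case: (split_dup Uc) => a [y [b [d ec]]].
  have hr : rot (size a) c = y :: b ++ y :: (d ++ a) by rewrite ec rot_size_cat /= -catA.
  have cc' : cycle e (y :: b ++ y :: (d ++ a)) by rewrite -hr rot_cycle.
  have gc' : cg (y :: b ++ y :: (d ++ a)) = cg (y :: b) + cg (y :: (d ++ a)).
    by rewrite /cg rcons_cat /= wg_cat /= (wg_rcons y b) addrA.
  move: cc'; rewrite /= rcons_cat cat_path /= => /and3P[p1 e1 p2].
  have sz : size c = ((size a + size b + size d).+2)%N.
    by rewrite ec !size_cat /= !size_cat /= !addnS addnA.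
  have := gc; rewrite -(cg_rot (size a)) hr gc'.
  case: (boolP (cg (y :: b) == 0)) => [/eqP -> | g1] g2.
    apply: (small (y :: (d ++ a))).
      by rewrite sz /= size_cat; move: (size a) (size b) (size d); clear; lia.
      by move: p2; rewrite /= rcons_path /=.
    by rewrite add0r in g2.
  apply: (small (y :: b)) g1.
    by rewrite sz /=; move: (size a) (size b) (size d); clear; lia.
  by rewrite /= rcons_path p1 e1.
case: c sc cc gc Uc small => [|y [|z [|w q]]].
- by rewrite eqxx.
- by move=> _ /=; rewrite (negbTE (eirr y)).
- by move=> _ /= /andP[ezy _]; rewrite /cg /= (g_anti ezy) addr0 addrN eqxx.
set c := [:: y, z, w & q] => sc cc gc Uc small.
destruct (classic (forall u v, u \in c -> v \in c -> e u v = cyc_adj c u v)) as [H|H].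
  by exists c; split.
move: H => /not_all_ex_not [u /not_all_ex_not [v H]].
case: (boolP (u \in c)) => uc; last by exfalso; apply: H => hu; rewrite hu in uc.
case: (boolP (v \in c)) => vc; last by exfalso; apply: H => _ hv; rewrite hv in vc.
have ne : e u v != cyc_adj c u v by apply/eqP => E; apply: H.
have ce : cyc_adj c u v -> e u v.
  rewrite /cyc_adj => /orP [/eqP <-| /eqP <-]; first exact: next_cycle.
  by rewrite esym; exact: next_cycle.
have euv : e u v.
  case: (boolP (cyc_adj c u v)) => [/ce //|na].
  by move: ne; rewrite (negbTE na); case: (e u v).
have nadj : ~~ cyc_adj c u v by move: ne; rewrite euv; case: (cyc_adj c u v).
move: nadj; rewrite /cyc_adj negb_or => /andP[nuv nvu].
have uv : u != v by apply/eqP => E; move: euv; rewrite E (negbTE (eirr v)).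
have [c1 [c2 ec]] := mem_split uc.
have hr : rot (size c1) c = u :: (c2 ++ c1) by rewrite ec rot_size_cat.
have nr x : next (u :: (c2 ++ c1)) x = next c x by rewrite -hr (next_rot _ Uc).
have vq : v \in c2 ++ c1.
  by move: vc; rewrite -(mem_rot (size c1)) hr inE eq_sym (negbTE uv).
have [q1 [q2 eq]] := mem_split vq.
have Uc' : uniq (u :: q1 ++ v :: q2) by rewrite -eq -hr rot_uniq.
have := cycle_next Uc'.
have nr' x : next (u :: q1 ++ v :: q2) x = next c x by rewrite -eq nr.
move: (next (u :: q1 ++ v :: q2)) nr' => nx nr'.
rewrite /= rcons_cat cat_path /=; case/and3P => _ h1 h2.
have q1n : q1 != [::].
  by apply/eqP => q10; move: h1; rewrite q10 /= nr' (negbTE nuv).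
have q2n : q2 != [::].
  by apply/eqP => q20; move: h2; rewrite q20 /= andbT nr' (negbTE nvu).
have cc' : cycle e (u :: q1 ++ v :: q2) by rewrite -eq -hr rot_cycle.
have gg : cg c = cg (u :: rcons q1 v) + cg (v :: rcons q2 u).
  rewrite -(cg_rot (size c1)) hr eq /= rcons_cat wg_cat /= !wg_rcons !last_rcons.
  rewrite (g_anti euv); ring.
move: cc'; rewrite /= rcons_cat cat_path /= => /and3P[p1 e1 p2].
have sz : size c = ((size q1 + size q2).+2)%N.
  by rewrite -(size_rot (size c1)) hr eq /= size_cat /= addnS.
move: q1n q2n; rewrite -!size_eq0 => q1n q2n.
move: gc; rewrite gg.
case: (boolP (cg (u :: rcons q1 v) == 0)) => [/eqP -> | g1] g2.
  apply: (small (v :: rcons q2 u)).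
      by rewrite sz /= size_rcons; move: q1n; move: (size q1) (size q2); clear; lia.
    by rewrite /= rcons_path last_rcons p2 euv.
  by rewrite add0r in g2.
apply: (small (u :: rcons q1 v)) g1.
  by rewrite sz /= size_rcons; move: q2n; move: (size q1) (size q2); clear; lia.
by rewrite /= !rcons_path last_rcons p1 e1 /= esym euv.
Qed.


Lemma build : (forall c, cycle e c -> cg c = 0) ->
  exists k : T -> 'Z_(m.+2), forall u v, e u v -> piL (K u v) (k u) = k v.
Proof.
move=> H0.
have sc : connect_sym e by apply: sym_connect_sym.
have ex v : exists p, path e (fingraph.root e v) p && (last (fingraph.root e v) p == v).
  have : connect e (fingraph.root e v) v by rewrite sc connect_root.
  by case/connectP => p pp lp; exists p; rewrite pp -lp eqxx.
pose P v := xchoose (ex v).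
pose H v := wg (fingraph.root e v) (P v).
exists (fun v => if f v then - H v else H v).
move=> u v euv.
have rt : fingraph.root e u = fingraph.root e v by apply/(fingraph.rootP sc); apply: connect1.
have /andP[pu /eqP lu] := xchooseP (ex u).
have /andP[pv /eqP lv] := xchooseP (ex v).
rewrite -/(P u) in pu lu; rewrite -/(P v) -rt in pv lv.
set r := fingraph.root e u in pu lu pv lv rt.
pose p := P u ++ v :: rev (belast r (P v)).
have pp : path e r p.
  rewrite /p cat_path pu lu /= euv /=.
  by rewrite -{1}lv rev_path; move: pv; apply: sub_path => x y /=; rewrite esym.
have lp : last r p = r by rewrite /p last_cat /= -{1}lv last_rev_belast.
have gp : wg r p = H u + g u v - H v.
  rewrite /p wg_cat lu /=.
  rewrite (_ : wg v (rev (belast r (P v))) = - wg r (P v)); last first.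
    have := wg_rev pv; rewrite lv. done.
  rewrite /H -/r -rt -/r; ring.
have E : H u + g u v - H v = 0.
  rewrite -gp; clearbody p; move: pp lp {gp}; case/lastP: p => [|q z] //=.
  rewrite last_rcons => pp lz; rewrite lz in pp *; apply: (H0 (r :: q)).
  by rewrite /= pp.
rewrite piLE; have := fbip euv; rewrite /g in E.
case: (f u) E; case: (f v) => //= E _.
  apply/eqP; rewrite -subr_eq0; apply/eqP; rewrite -E; ring.
apply/eqP; rewrite -subr_eq0; apply/eqP; rewrite -oppr0 -E; ring.
Qed.

End S.

Theorem theorem9 (T : finType) (e : rel T) (n : nat) (K : T -> T -> 'I_n) :
  0 < n -> simple_graph e -> bipartite e -> edge_labeling e K ->
  (~ has_consistent e K <->
   exists c : seq T, chordless_cycle e c /\ ~ cycle_consistent K c).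
Proof.
move=> n0 [eirr esym] [f fb] Ksym; split; last first.
  case=> c [[Uc s3 hc] nc] [k hk]; apply: nc; exists k => u v uc vc adj.
  by apply: hk; rewrite hc.
move=> nh.
case: n K n0 nh Ksym => [//|[|m]] K _ nh Ksym.
  exfalso; apply: nh; exists (fun _ => ord0) => u v _.
  by rewrite (ord1 (piL _ _)).
have [[c [cc gc]]|nc] := classic (exists c, cycle e c /\ cg f K c != 0%R).
  have [c' [ch gc']] := min_cycle esym eirr fb Ksym (leqnn (size c)) cc gc.
  exists c'; split => // -[k hk]; apply: (negP gc'); apply/eqP.
  exact: (@chordless_gain m T e f K fb c' k ch hk).
exfalso; apply: nh.
have [|k hk] := @build m T e f K esym fb Ksym.
  by move=> c cc; case: (eqVneq (cg f K c) 0%R) => // gc; exfalso; apply: nc; exists c.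
by exists k.
Qed.
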